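(* Let $\mathcal P$ be a path and let $\{p_1,\dots,p_m\}$ and $\{q_1,\dots,q_k\}$ be two different sets of plaquettes in $\mathcal B_{\mathcal P}$ such that $\bigoplus_{i=1}^m\vec\alpha^{p_i}=\bigoplus_{j=1}^k\vec\alpha^{q_j}$ when restricted to $\mathrm{Conn}(\mathcal P)$. Then for every configuration $\vec i$, $\theta_{\mathcal P}(\vec i,p_1,\dots,p_m)=\theta_{\mathcal P}(\vec i,q_1,\dots,q_k)$.
   Context: Let $\Lambda$ be a hexagonal (honeycomb) lattice embedded in a closed orientable surface, with one qubit on each edge. For an edge $j$, $\sigma^x_j,\sigma^z_j$ denote the Pauli operators on qubit $j$ and $n^{\pm}_j=\tfrac12(1\pm\sigma^z_j)$. A (string) configuration $\vec i$ is a computational basis state, viewed as a bit string assigning $0$ (empty) or $1$ (occupied) to each edge; $\vec i\oplus\vec\alpha$ is bitwise addition mod 2. For a hexagonal plaquette $p$, label its boundary edges $1,\dots,6$ cyclically (index $0$ means $6$) and its outgoing edges so that edge $12$ meets edges $6,1$; edge $7$ meets $1,2$; edge $8$ meets $2,3$; edge $9$ meets $3,4$; edge $10$ meets $4,5$; edge $11$ meets $5,6$. Define $B_p=\Big(\prod_{j=1}^6\sigma^x_j\Big)\Big(\prod_{j=1}^6(-1)^{n^-_{j-1}n^+_j}\Big)\,i^{n^-_{12}(n^-_1n^-_6-n^+_1n^+_6)}\,i^{n^-_7(n^+_1n^+_2-n^-_1n^-_2)}\,i^{n^+_8(n^-_2n^+_3-n^+_2n^-_3)}\,i^{n^-_9(n^-_3n^-_4-n^+_3n^+_4)}\,i^{n^-_{10}(n^+_4n^+_5-n^-_4n^-_5)}\,i^{n^+_{11}(n^-_5n^+_6-n^+_5n^-_6)}$;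 all $B_p$ commute pairwise and square to the identity, and the product of all $B_p$ over the lattice is the identity. Write $B_p=\prod_{j\in\partial p}\sigma^x_j\sum_{\vec i}b_p(\vec i)|\vec i\rangle\langle\vec i|$, defining the phase $b_p(\vec i)$. Let $\vec\alpha^p$ be the configuration occupied exactly on the boundary edges of $p$. A path $\mathcal P$ is a sequence of edges forming a walk; $\vec\alpha^{\mathcal P}$ is the mod-2 sum of the indicators of its edges and $X_{\mathcal P}$ the product of $\sigma^x$ over its edges. $\mathrm{Conn}(\mathcal P)$ is the set of edges of $\mathcal P$ together with all edges sharing a vertex with an edge of $\mathcal P$; $\mathcal B_{\mathcal P}$ is the set of plaquettes with at least one boundary edge in $\mathrm{Conn}(\mathcal P)$. Define $\theta_{\mathcal P}(\vec i,p_1,\dots,p_m)=\prod_{k=1}^m \frac{b_{p_k}(\vec i\oplus\vec\alpha^{\mathcal P}\oplus\bigoplus_{j<k}\vec\alpha^{p_j})}{b_{p_k}(\vec i\oplus\bigoplus_{j<k}\vec\alpha^{p_j})}$ for configurations $\vec i$ on the whole lattice. *)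

(* Defs.v *)
(* Honeycomb lattice on a torus (the only closed orientable
   surface carrying a honeycomb lattice), L1 x L2 unit cells. *)
From HB Require Import structures.
From mathcomp Require Import all_boot all_order all_algebra all_field.
Set Implicit Arguments. Unset Strict Implicit. Unset Printing Implicit Defensive.
Import GRing.Theory Num.Theory.
Local Open Scope ring_scope.

(* unit cells of the torus; one hexagonal plaquette per cell *)
Definition cell (L1 L2 : nat) := ('Z_L1 * 'Z_L2)%type.
(* edges (= qubits): three per cell, of kind a (0), b (1), c (2) *)
Definition edge (L1 L2 : nat) := (cell L1 L2 * 'I_3)%type.
(* vertices: two per cell, A (true) and B (false) *)
Definition vertex (L1 L2 : nat) := (cell L1 L2 * bool)%type.
(* string configurations = computational basis states = bit strings on edges *)
Definition config (L1 L2 : nat) := {ffun edge L1 L2 -> bool}.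

Definition shc L1 L2 (c : cell L1 L2) (dx : 'Z_L1) (dy : 'Z_L2) : cell L1 L2 :=
  (c.1 + dx, c.2 + dy).

Definition ea L1 L2 (c : cell L1 L2) : edge L1 L2 := (c, @Ordinal 3 0 isT).
Definition eb L1 L2 (c : cell L1 L2) : edge L1 L2 := (c, @Ordinal 3 1 isT).
Definition ec L1 L2 (c : cell L1 L2) : edge L1 L2 := (c, @Ordinal 3 2 isT).

Definition endpoints L1 L2 (e : edge L1 L2) : vertex L1 L2 * vertex L1 L2 :=
  let c := e.1 in
  match val e.2 with
  | 0 => ((c, true), (c, false))
  | 1 => ((c, true), (shc c (-1) 0, false))
  | _ => ((c, true), (shc c 0 (-1), false))
  end.

Definition incident L1 L2 (v : vertex L1 L2) (e : edge L1 L2) : bool :=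
  (v == (endpoints e).1) || (v == (endpoints e).2).

Definition other_end L1 L2 (e : edge L1 L2) (v : vertex L1 L2) : vertex L1 L2 :=
  if v == (endpoints e).1 then (endpoints e).2 else (endpoints e).1.

(* edge labels of the plaquette p (the hexagon of cell p):
   boundary edges 1..6 in cyclic order, outgoing edges 7..12 with
   12 meeting 6,1; 7 meeting 1,2; 8 meeting 2,3; 9 meeting 3,4;
   10 meeting 4,5; 11 meeting 5,6. *)
Definition pl_edge L1 L2 (p : cell L1 L2) (j : nat) : edge L1 L2 :=
  match j with
  | 1 => ea p
  | 2 => eb (shc p 1 0)
  | 3 => ec (shc p 1 0)
  | 4 => ea (shc p 1 (-1))
  | 5 => eb (shc p 1 (-1))
  | 6 => ec p
  | 7 => ec (shc p 0 1)
  | 8 => ea (shc p 1 0)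
  | 9 => eb (shc p 2%:R (-1))
  | 10 => ec (shc p 1 (-1))
  | 11 => ea (shc p 0 (-1))
  | _ => eb p
  end.

Definition bdry L1 L2 (p : cell L1 L2) : seq (edge L1 L2) :=
  [seq pl_edge p j | j <- iota 1 6].

Definition prev6 (j : nat) : nat := if j == 1%N then 6%N else j.-1.

(* n^-_j = 1 on an occupied edge, n^+_j = 1 on an empty edge *)
Definition nm L1 L2 (i : config L1 L2) (e : edge L1 L2) : int := (nat_of_bool (i e))%:Z.
Definition np L1 L2 (i : config L1 L2) (e : edge L1 L2) : int := 1 - nm i e.

(* the phase b_p(i) of B_p on the basis state |i> *)
Definition bphase L1 L2 (p : cell L1 L2) (i : config L1 L2) : algC :=
  let m j := nm i (pl_edge p j) in
  let q j := np i (pl_edge p j) in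
  (\prod_(1 <= j < 7) (-1) ^ (m (prev6 j) * q j))
  * 'i ^ (m 12%N * (m 1%N * m 6%N - q 1%N * q 6%N))
  * 'i ^ (m 7%N * (q 1%N * q 2%N - m 1%N * m 2%N))
  * 'i ^ (q 8%N * (m 2%N * q 3%N - q 2%N * m 3%N))
  * 'i ^ (m 9%N * (m 3%N * m 4%N - q 3%N * q 4%N))
  * 'i ^ (m 10%N * (q 4%N * q 5%N - m 4%N * m 5%N))
  * 'i ^ (q 11%N * (m 5%N * q 6%N - q 5%N * m 6%N)).

Definition cxor L1 L2 (i j : config L1 L2) : config L1 L2 := [ffun e => i e (+) j e].
Definition czero L1 L2 : config L1 L2 := [ffun => false].

Definition alpha_pl L1 L2 (p : cell L1 L2) : config L1 L2 := [ffun e => e \in bdry p].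

Definition xsum L1 L2 (ps : seq (cell L1 L2)) : config L1 L2 :=
  foldr (fun p acc => cxor (alpha_pl p) acc) (czero L1 L2) ps.

(* a path: a walk starting at vertex v, given by its sequence of edges *)
Fixpoint is_walk L1 L2 (v : vertex L1 L2) (es : seq (edge L1 L2)) : bool :=
  match es with
  | [::] => true
  | e :: es' => incident v e && is_walk (other_end e v) es'
  end.

Definition alpha_path L1 L2 (es : seq (edge L1 L2)) : config L1 L2 :=
  foldr (fun e acc => cxor [ffun f => f == e] acc) (czero L1 L2) es.

Definition share_vertex L1 L2 (e f : edge L1 L2) : bool :=
  [exists v : vertex L1 L2, incident v e && incident v f].

Definition inConn L1 L2 (es : seq (edge L1 L2)) (e : edge L1 L2) : bool :=
  (e \in es) || has (share_vertex e) es.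

Definition inB L1 L2 (es : seq (edge L1 L2)) (p : cell L1 L2) : bool :=
  has (inConn es) (bdry p).

Definition theta L1 L2 (es : seq (edge L1 L2)) (i : config L1 L2)
    (ps : seq (cell L1 L2)) : algC :=
  \prod_(k < size ps)
     (bphase (nth (0, 0) ps k) (cxor (cxor i (alpha_path es)) (xsum (take k ps)))
      / bphase (nth (0, 0) ps k) (cxor i (xsum (take k ps)))).

(* Main.v *)
Require Import Defs.
From HB Require Import structures.
From mathcomp Require Import all_boot all_order all_algebra all_field.
From mathcomp Require Import ring.
Set Implicit Arguments. Unset Strict Implicit. Unset Printing Implicit Defensive.
Import GRing.Theory Num.Theory.
Local Open Scope ring_scope.

Notation Z4 := 'Z_4.
Definition b2 (b : bool) : Z4 := (nat_of_bool b)%:R.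
Definition trip := (bool * bool * bool)%type.
Definition get (l : trip) (k : nat) : bool :=
  match k with 0 => l.1.1 | 1 => l.1.2 | _ => l.2 end.
Definition txor (l m : trip) : trip := (l.1.1 (+) m.1.1, l.1.2 (+) m.1.2, l.2 (+) m.2).
Definition fl (x : nat) : trip :=
  match x with 0 => (true, false, true) | 1 => (false, true, true) | _ => (true, true, false) end.
Definition floc (x : nat) (l : trip) : Z4 :=
  let a := b2 l.1.1 in let b := b2 l.1.2 in let c := b2 l.2 in
  match x with
  | 0 => 2 * (c * (1 - a)) + b * (a * c - (1 - a) * (1 - c))
  | 1 => 2 * (b * (1 - c)) + (1 - a) * (b * (1 - c) - (1 - b) * c)
  | _ => 2 * (a * (1 - b)) + c * ((1 - a) * (1 - b) - a * b)
  end.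
Fixpoint Gloc (s : seq nat) (l : trip) : Z4 :=
  if s is x :: s' then floc x l + Gloc s' (txor l (fl x)) else 0.
Definition tzero : trip := (false, false, false).
Definition par (s : seq nat) : trip := foldr (fun x acc => txor (fl x) acc) tzero s.
Definition c1 (k : nat) : nat := match k with 0 => 0 | 1 => 1 | _ => 0 end.
Definition c2 (k : nat) : nat := match k with 0 => 2 | 1 => 2 | _ => 1 end.
Definition subl (t : bool) (k : nat) (s : seq nat) : seq bool :=
  [seq (if t then x == c2 k else x == c1 k) | x <- s & (x == c1 k) || (x == c2 k)].
Definition enc (s : seq bool) : nat :=
  match s with
  | [::] => 0 | [:: false] => 1 | [:: true] => 2
  | [:: false; true] => 3 | [:: true; false] => 4 | _ => 0 end.
Definition table : seq nat :=
 [:: 0; 0; 0; 0; 0; 0; 3; 1; 1; 3; 0; 0; 0; 0; 3; 1; 0; 0; 0; 0; 0; 0; 1; 3; 0; 0; 0; 0; 0; 0; 1; 3; 0; 0; 0; 0; 0; 0; 2; 2; 3; 1; 0; 0; 0; 0; 2; 2; 0; 0; 0; 0; 0; 0; 0; 0; 1; 3; 3; 1; 0; 0; 0; 0; 1; 3; 0; 0; 0; 0; 0; 0; 3; 1; 0; 0; 0; 0; 0; 0; 3; 1; 0; 0; 0; 0; 0; 0; 2; 2; 1; 3; 0; 0; 0; 0; 2; 2; 0; 0; 0; 0; 0; 0; 0; 0; 1; 3; 3; 1; 0; 0; 0; 0; 1; 3; 0; 0; 0; 0; 0; 0; 3; 1; 0; 0; 0; 0; 0; 0; 3; 1; 0;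 0; 0; 0; 0; 0; 2; 2; 1; 3; 0; 0; 0; 0; 2; 2; 0; 0].
Definition psi (k : nat) (s1 s2 : seq bool) (l : bool) : Z4 :=
  (nth 0%N table (((k * 5 + enc s1) * 5 + enc s2) * 2 + l))%:R.
Definition Delta (s1 s2 : seq nat) (l a : trip) : Z4 :=
  (Gloc s2 (txor l a) - Gloc s2 l) - (Gloc s1 (txor l a) - Gloc s1 l).
Definition sg (t : bool) : Z4 := if t then 1 else -1.
Definition Rhs (t : bool) (s1 s2 : seq nat) (l a : trip) : Z4 :=
  sg t * (b2 (get a 0) * psi 0 (subl t 0 s1) (subl t 0 s2) (get l 0)
        + b2 (get a 1) * psi 1 (subl t 1 s1) (subl t 1 s2) (get l 1)
        + b2 (get a 2) * psi 2 (subl t 2 s1) (subl t 2 s2) (get l 2)).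
Definition L3 : seq nat := iota 0 3.
Definition allseqs : seq (seq nat) :=
  [:: [::]] ++ [seq [:: x] | x <- L3] ++ flatten [seq [seq [:: x; y] | y <- L3] | x <- L3]
  ++ flatten (flatten [seq [seq [seq [:: x; y; z] | z <- L3] | y <- L3] | x <- L3]).
Definition trips : seq trip :=
  flatten (flatten [seq [seq [seq (x, y, z) | z <- [:: true; false]] | y <- [:: true; false]] | x <- [:: true; false]]).
Definition check : bool :=
  all (fun t => all (fun s1 => all (fun s2 => all (fun l => all (fun a =>
    (uniq s1 && uniq s2 && ((a == tzero) || (par s1 == par s2))) ==>
    (Delta s1 s2 l a == Rhs t s1 s2 l a)) trips) trips) allseqs) allseqs) [:: true; false].


Definition bn (b : bool) : nat := nat_of_bool b.
Definition flocN (x : nat) (l : trip) : nat :=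
  let a := bn l.1.1 in let b := bn l.1.2 in let c := bn l.2 in
  match x with
  | 0 => 2 * (c * (1 - a)) + b * (a * c + 3 * ((1 - a) * (1 - c)))
  | 1 => 2 * (b * (1 - c)) + (1 - a) * (b * (1 - c) + 3 * ((1 - b) * c))
  | _ => 2 * (a * (1 - b)) + c * ((1 - a) * (1 - b) + 3 * (a * b))
  end%N.
Fixpoint GlocN (s : seq nat) (l : trip) : nat :=
  if s is x :: s' then (flocN x l + GlocN s' (txor l (fl x)))%N else 0%N.
Definition DeltaN (s1 s2 : seq nat) (l a : trip) : nat :=
  (GlocN s2 (txor l a) + 3 * GlocN s2 l + 3 * GlocN s1 (txor l a) + GlocN s1 l)%N.
Definition psiN (k : nat) (s1 s2 : seq bool) (l : bool) : nat :=
  nth 0%N table (((k * 5 + enc s1) * 5 + enc s2) * 2 + l).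
Definition RhsN (t : bool) (s1 s2 : seq nat) (l a : trip) : nat :=
  ((if t then 1 else 3) * (bn (get a 0) * psiN 0 (subl t 0 s1) (subl t 0 s2) (get l 0)
        + bn (get a 1) * psiN 1 (subl t 1 s1) (subl t 1 s2) (get l 1)
        + bn (get a 2) * psiN 2 (subl t 2 s1) (subl t 2 s2) (get l 2)))%N.
Definition check1 (t : bool) (s1 : seq nat) : bool :=
  all (fun s2 => all (fun l => all (fun a =>
    (uniq s1 && uniq s2 && ((a == tzero) || (par s1 == par s2))) ==>
    (DeltaN s1 s2 l a %% 4 == RhsN t s1 s2 l a %% 4)%N) trips) trips) allseqs.
Lemma check_ok : all (fun t => all (check1 t) allseqs) [:: true; false].
Proof. vm_compute. reflexivity. Qed.

Definition phi (z : Z4) : algC := 'i ^+ (nat_of_ord z).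
Lemma i4 : 'i ^+ 4 = 1 :> algC.
Proof. by rewrite (_ : 4%N = (2 * 2)%N) // exprM sqrCi expr2 mulN1r opprK. Qed.
Lemma iinv : ('i : algC) ^-1 = 'i ^+ 3.
Proof. apply: (@mulIf _ 'i); first by rewrite neq0Ci. rewrite mulVf ?neq0Ci // -exprSr i4 //. Qed.
Lemma m1i : (-1 : algC) = 'i ^+ 2. Proof. by rewrite sqrCi. Qed.
Ltac evalz := match goal with |- context [nat_of_ord ?z] =>
  let n := eval vm_compute in (nat_of_ord z) in
  rewrite (_ : nat_of_ord z = n); last by vm_compute end.
Ltac fin := rewrite ?m1i ?iinv ?mul1r ?mulr1 -?exprD -?exprSr -?exprS;
  try (rewrite -[RHS](expr_mod _ i4) /=);
  rewrite ?expr0 ?expr1 //.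
Ltac cornerT := case; case; case; rewrite /phi /floc; evalz => /=;
  rewrite ?mul0r ?mul1r ?mulr1 ?mulr0 ?subrr ?subr0 ?sub0r ?expr0z ?expr1z;
  try rewrite (_ : (-1 : int) = Negz 0) //; rewrite ?exprN1; fin.

Notation nz b := ((nat_of_bool b)%:Z).
Lemma K0 : forall a b c : bool, phi (floc 0 (a, b, c)) =
  (-1) ^ (nz c * (1 - nz a)) * 'i ^ (nz b * (nz a * nz c - (1 - nz a) * (1 - nz c))).
Proof. cornerT. Qed.
Lemma K0' : forall a b c : bool, phi (floc 0 (a, b, c)) =
  (-1) ^ (nz c * (1 - nz a)) * 'i ^ (nz b * (nz c * nz a - (1 - nz c) * (1 - nz a))).
Proof. cornerT. Qed.
Lemma K1 : forall a b c : bool, phi (floc 1 (a, b, c)) =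
  (-1) ^ (nz b * (1 - nz c)) * 'i ^ ((1 - nz a) * (nz b * (1 - nz c) - (1 - nz b) * nz c)).
Proof. cornerT. Qed.
Lemma K2 : forall a b c : bool, phi (floc 2 (a, b, c)) =
  (-1) ^ (nz a * (1 - nz b)) * 'i ^ (nz c * ((1 - nz a) * (1 - nz b) - nz a * nz b)).
Proof. cornerT. Qed.



Lemma phiD (a b : Z4) : phi (a + b) = phi a * phi b.
Proof. by case: a b => a Ha [b Hb]; rewrite /phi /= (expr_mod _ i4) exprD. Qed.
Lemma phi0 : phi 0 = 1. Proof. by rewrite /phi /= expr0. Qed.
Lemma phi_neq0 a : phi a != 0. Proof. by rewrite /phi expf_neq0 // neq0Ci. Qed.
Lemma phiN (a : Z4) : phi (- a) = (phi a)^-1.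
Proof.
apply: (@mulIf _ (phi a)); first exact: phi_neq0.
by rewrite -phiD addNr phi0 mulVf ?phi_neq0.
Qed.
Lemma phiB (a b : Z4) : phi (a - b) = phi a / phi b.
Proof. by rewrite phiD phiN. Qed.

Lemma four0 : (4%:R : Z4) = 0. Proof. by apply/eqP; vm_compute. Qed.
Lemma three : (3%:R : Z4) = -1.
Proof. by apply/eqP; vm_compute. Qed.
Lemma Z4nat (n : nat) : (n%:R : Z4) = ((n %% 4)%N)%:R.
Proof. by rewrite {1}(divn_eq n 4) natrD natrM four0 mulr0 add0r. Qed.
Lemma natZ4 (n m : nat) : (n %% 4 = m %% 4)%N -> (n%:R : Z4) = m%:R.
Proof. by move=> H; rewrite (Z4nat n) (Z4nat m) H. Qed.
Lemma flocE x l : floc x l = (flocN x l)%:R.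
Proof.
case: l => [[a b] c]; case: x => [|[|[|x]]]; case: a; case: b; case: c;
  by apply/eqP; vm_compute.
Qed.
Lemma GlocE s l : Gloc s l = (GlocN s l)%:R.
Proof. by elim: s l => [|x s IH] l //=; rewrite IH flocE natrD. Qed.
Lemma mod4_aux (x y z w : Z4) :
  x - y - (z - w) = x + (y + (y + (y + 0))) + (z + (z + (z + 0))) + w.
Proof.
apply/eqP; rewrite -subr_eq0; apply/eqP.
rewrite (_ : _ - _ = - (4%:R * (y + z))); first by rewrite four0 mul0r oppr0.
ring.
Qed.
Lemma DeltaE s1 s2 l a : Delta s1 s2 l a = (DeltaN s1 s2 l a)%:R.
Proof. by rewrite /Delta /DeltaN !GlocE !natrD mod4_aux. Qed.


Lemma RhsE t s1 s2 l a : Rhs t s1 s2 l a = (RhsN t s1 s2 l a)%:R.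
Proof.
rewrite /Rhs /RhsN /b2 /psi.
case: t; rewrite [in RHS]natrM [X in _ = _ * X]natrD [X in _ = _ * (X + _)]natrD.
- by rewrite !natrM mul1r.
- by rewrite !natrM three.
Qed.
Lemma seq_mem s : all (fun x => x < 3)%N s -> uniq s -> s \in allseqs.
Proof.
move=> Hall Hu.
have : (size s <= size L3)%N.
  apply: uniq_leq_size => // x xs; move/allP: Hall => /(_ x xs).
  by rewrite /L3 mem_iota.
move: Hall {Hu}.
case: s => [|x [|y [|z [|w s]]]] //=.
- by case/andP; case: x => [|[|[|x]]].
- case/and3P; case: x => [|[|[|x]]] //; case: y => [|[|[|y]]] //.
- case/and4P; case: x => [|[|[|x]]] //; case: y => [|[|[|y]]] //;
  case: z => [|[|[|z]]] //.
Qed.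
Lemma trip_mem (l : trip) : l \in trips.
Proof. by case: l => [[[] []] []]. Qed.

Lemma local_main t s1 s2 l a :
  all (fun x => x < 3)%N s1 -> all (fun x => x < 3)%N s2 -> uniq s1 -> uniq s2 ->
  (a == tzero) || (par s1 == par s2) -> Delta s1 s2 l a = Rhs t s1 s2 l a.
Proof.
move=> A1 A2 U1 U2 C.
have mt : t \in [:: true; false] by case: t.
have := check_ok; move/allP => /(_ t mt) /allP /(_ s1 (seq_mem A1 U1)).
rewrite /check1 => /allP /(_ s2 (seq_mem A2 U2)) /allP /(_ l (trip_mem l)).
move=> /allP /(_ a (trip_mem a)) /implyP.
rewrite U1 U2 C => /(_ isT) /eqP H.
by rewrite DeltaE RhsE; apply: natZ4.
Qed.



Section Geo.
Variables L1 L2 : nat.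
Local Notation cellT := (cell L1 L2).
Local Notation vtx := (vertex L1 L2).
Local Notation edg := (edge L1 L2).
Local Notation cfg := (config L1 L2).

Lemma shcA (c : cellT) a b a' b' : shc (shc c a b) a' b' = shc c (a + a') (b + b').
Proof. by rewrite /shc /= !addrA. Qed.
Lemma shc_eqE (c : cellT) a b a' b' : (shc c a b == shc c a' b') = (a == a') && (b == b').
Proof. by rewrite /shc xpair_eqE !(inj_eq (addrI _)). Qed.
Lemma shc_eqL (c : cellT) a b : (c == shc c a b) = (0 == a) && (0 == b).
Proof.
case: c => x y; rewrite /shc xpair_eqE /= -{1}[x]addr0 -{1}[y]addr0.
by rewrite !(inj_eq (addrI _)).
Qed.
Lemma shc_eqR (c : cellT) a b : (shc c a b == c) = (a == 0) && (b == 0).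
Proof. by rewrite eq_sym shc_eqL ![0 == _]eq_sym. Qed.
Lemma num1 (L : nat) : ((1 : 'Z_L) == 0) = false. Proof. exact: oner_eq0. Qed.
Lemma num2 (L : nat) : ((0 : 'Z_L) == 1) = false. Proof. by rewrite eq_sym oner_eq0. Qed.
Lemma num3 (L : nat) : ((-1 : 'Z_L) == 0) = false. Proof. by rewrite oppr_eq0 oner_eq0. Qed.
Lemma num4 (L : nat) : ((0 : 'Z_L) == -1) = false. Proof. by rewrite eq_sym oppr_eq0 oner_eq0. Qed.

Lemma shc00 (c : cellT) : shc c 0 0 = c.
Proof. by case: c => x y; rewrite /shc !addr0. Qed.
Ltac cellsimp := rewrite ?shcA ?shc00 ?shc_eqE ?shc_eqL ?shc_eqR ?addNr ?addrN ?add0r ?addr0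
  ?eqxx ?num1 ?num2 ?num3 ?num4 ?shc00 /=.

Definition PA (c : cellT) (x : nat) : cellT :=
  match x with 0 => c | 1 => shc c (-1) 0 | _ => shc c (-1) 1 end.
Definition PB (c : cellT) (x : nat) : cellT :=
  match x with 0 => shc c (-1) 1 | 1 => shc c 0 1 | _ => c end.
Definition Pv (v : vtx) (x : nat) : cellT := if v.2 then PA v.1 x else PB v.1 x.
Definition idx (v : vtx) (p : cellT) : option nat :=
  if p == Pv v 0 then Some 0%N else if p == Pv v 1 then Some 1%N
  else if p == Pv v 2 then Some 2%N else None.
Definition edv (v : vtx) (k : nat) : edg :=
  if v.2 then match k with 0 => ea v.1 | 1 => eb v.1 | _ => ec v.1 end
  else match k with 0 => ea v.1 | 1 => eb (shc v.1 1 0) | _ => ec (shc v.1 0 1) end.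
Definition loc (v : vtx) (x : cfg) : trip := (x (edv v 0), x (edv v 1), x (edv v 2)).

Lemma Pv_neq (v : vtx) x y : (x < 3)%N -> (y < 3)%N -> (Pv v x == Pv v y) = (x == y).
Proof.
case: v => c [] /=; case: x => [|[|[|x]]] //; case: y => [|[|[|y]]] //= _ _;
  rewrite /Pv /PA /PB /=; cellsimp; done.
Qed.

Variant idx_spec (v : vtx) (p : cellT) : option nat -> Type :=
| IdxSome y of (y < 3)%N & p = Pv v y : idx_spec v p (Some y)
| IdxNone of (forall y, (y < 3)%N -> p != Pv v y) : idx_spec v p None.

Lemma idxP v p : idx_spec v p (idx v p).
Proof.
rewrite /idx; case: eqP => [->|h0]; first by constructor.
case: eqP => [->|h1]; first by constructor.
case: eqP => [->|h2]; first by constructor.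
by constructor => -[|[|[|y]]] // _; apply/eqP.
Qed.

Lemma idx_Pv v y : (y < 3)%N -> idx v (Pv v y) = Some y.
Proof.
move=> hy; case: idxP => [z hz /eqP|/(_ y hy)]; last by rewrite eqxx.
by rewrite Pv_neq // => /eqP ->.
Qed.

Lemma mem_bdry (p c : cellT) (o : 'I_3) : ((c, o) \in bdry p) =
  match val o with
  | 0 => (c == p) || (c == shc p 1 (-1))
  | 1 => (c == shc p 1 0) || (c == shc p 1 (-1))
  | _ => (c == shc p 1 0) || (c == p) end.
Proof.
rewrite /bdry /= !inE /pl_edge /ea /eb /ec !xpair_eqE.
by case: o => [[|[|[|o]]] Ho] //=; rewrite ?andbT ?andbF ?orbF ?orbT /=.
Qed.

Lemma mem_bdry2 (p c : cellT) (o : 'I_3) : ((c, o) \in bdry p) =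
  match val o with
  | 0 => (p == c) || (p == shc c (-1) 1)
  | 1 => (p == shc c (-1) 0) || (p == shc c (-1) 1)
  | _ => (p == shc c (-1) 0) || (p == c) end.
Proof.
have mv (a : 'Z_L1) (b : 'Z_L2) : (c == shc p a b) = (p == shc c (- a) (- b)).
  apply/eqP/eqP => ->; rewrite shcA ?addrN ?addNr shc00 //.
rewrite mem_bdry; case: o => [[|[|[|o]]] Ho] //=; rewrite ?mv ?opprK ?oppr0; try rewrite (eq_sym c p); done.
Qed.

Lemma alpha_loc (p : cellT) (v : vtx) (k : nat) : (k < 3)%N ->
  alpha_pl p (edv v k) = if idx v p is Some y then get (fl y) k else false.
Proof.
move=> hk; rewrite /alpha_pl ffunE; case: idxP => [y hy ->| hn].
  case: v => c [] /=; case: y hy => [|[|[|y]]] // _; case: k hk => [|[|[|k]]] // _;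
  rewrite /Pv /PA /PB /edv /ea /eb /ec /= mem_bdry2 /=; cellsimp; done.
move: (hn 0%N isT) (hn 1%N isT) (hn 2%N isT); clear hn.
case: v => c [] /=; case: k hk => [|[|[|k]]] // _;
  rewrite /Pv /PA /PB /edv /ea /eb /ec /= mem_bdry2 /=; cellsimp;
  move=> /negbTE h0 /negbTE h1 /negbTE h2; by rewrite ?h0 ?h1 ?h2.
Qed.

Definition ev (v : vtx) (p : cellT) (x : cfg) : Z4 :=
  if idx v p is Some k then floc k (loc v x) else 0.
Definition E (p : cellT) (x : cfg) : Z4 := \sum_(v : vtx) ev v p x.
Fixpoint Fp (ps : seq cellT) (x : cfg) : Z4 :=
  if ps is p :: ps' then E p x + Fp ps' (cxor x (alpha_pl p)) else 0.

Lemma txor0 l : txor l tzero = l. Proof. by case: l => [[a b] c]; rewrite /txor /= !addbF. Qed.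
Lemma txor0l l : txor tzero l = l. Proof. by case: l => [[a b] c]. Qed.
Lemma loc_cxor v (x y : cfg) : loc v (cxor x y) = txor (loc v x) (loc v y).
Proof. by rewrite /loc /cxor /txor !ffunE. Qed.
Lemma loc_alpha v p : loc v (alpha_pl p) = if idx v p is Some y then fl y else tzero.
Proof.
rewrite /loc !alpha_loc //; case: (idx v p) => [y|] //.
by case: y => [|[|[|y]]].
Qed.

Lemma Fp_sum ps x : Fp ps x = \sum_(v : vtx) Gloc (pmap (idx v) ps) (loc v x).
Proof.
elim: ps x => [|p ps IH] x /=; first by rewrite big1.
rewrite IH /E -big_split /=; apply: eq_bigr => v _.
rewrite /ev loc_cxor loc_alpha /=; case: (idx v p) => [y|] //=.
by rewrite txor0 add0r.
Qed.

Lemma par_xsum v ps : par (pmap (idx v) ps) = loc v (xsum ps).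
Proof.
elim: ps => [|p ps IH]; first by rewrite /loc /xsum /czero /= !ffunE.
rewrite /xsum /= -/(xsum ps) loc_cxor loc_alpha -IH.
by case: (idx v p) => [y|] //=; rewrite txor0l.
Qed.

Lemma pmap_uniq_idx v ps : uniq ps -> uniq (pmap (idx v) ps).
Proof.
apply: (pmap_uniq (g := Pv v)) => p; rewrite /oapp.
by case: idxP => [y _ ->|].
Qed.
Lemma pmap_all_idx v ps : all (fun x => x < 3)%N (pmap (idx v) ps).
Proof. by elim: ps => [|p ps IH] //=; case: idxP => [y hy _|_] //=; rewrite hy. Qed.

Lemma sub_gen v (u w : nat) ps : (u < 3)%N -> (w < 3)%N ->
  [seq x == w | x <- pmap (idx v) ps & (x == u) || (x == w)] =
  [seq p == Pv v w | p <- ps & (p == Pv v u) || (p == Pv v w)].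
Proof.
move=> hu hw; elim: ps => [|p ps IH] //=.
case: idxP => [y hy ->|hn] /=.
  by rewrite !Pv_neq //; case: ifP => //= _; rewrite IH Pv_neq.
by rewrite (negbTE (hn u hu)) (negbTE (hn w hw)).
Qed.

Definition esub (e : edg) (ps : seq cellT) : seq bool :=
  [seq p == PA e.1 (c2 e.2) | p <- ps & (p == PA e.1 (c1 e.2)) || (p == PA e.1 (c2 e.2))].

Lemma subl_esub v k ps : (k < 3)%N ->
  subl v.2 k (pmap (idx v) ps) = esub (edv v k) ps.
Proof.
case: v => c [] hk.
  rewrite /subl /= sub_gen; last by case: k hk => [|[|[|k]]].
    by case: k hk => [|[|[|k]]].
  by case: k hk => [|[|[|k]]].
rewrite /subl /=.
rewrite (eq_filter (a2 := fun x => (x == c2 k) || (x == c1 k))); last by move=> x; rewrite orbC.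
rewrite sub_gen; try by case: k hk => [|[|[|k]]].
rewrite /esub /Pv /=.
rewrite (eq_filter (a2 := fun p => (p == PB c (c2 k)) || (p == PB c (c1 k)))); last by move=> x; rewrite orbC.
case: k hk => [|[|[|k]]] // _; rewrite /edv /PA /PB /=; cellsimp; done.
Qed.
End Geo.


Section Fac.
Variables L1 L2 : nat.
Local Notation cellT := (cell L1 L2).
Local Notation vtx := (vertex L1 L2).
Local Notation edg := (edge L1 L2).
Local Notation cfg := (config L1 L2).

Lemma shc_mv (c p : cellT) a b : (p == shc c a b) = (c == shc p (- a) (- b)).
Proof. apply/eqP/eqP => ->; rewrite shcA ?addrN ?addNr shc00 //. Qed.

Definition cA (p : cellT) (y : nat) : cellT :=
  match y with 0 => p | 1 => shc p 1 0 | _ => shc p 1 (-1) end.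
Definition cB (p : cellT) (y : nat) : cellT :=
  match y with 0 => shc p 1 (-1) | 1 => shc p 0 (-1) | _ => p end.

Lemma PA_cA (p c : cellT) y : (y < 3)%N -> (p == PA c y) = (c == cA p y).
Proof.
case: y => [|[|[|y]]] // _; rewrite /PA /cA; try rewrite shc_mv; rewrite ?opprK ?oppr0 //; exact: eq_sym.
Qed.
Lemma PB_cB (p c : cellT) y : (y < 3)%N -> (p == PB c y) = (c == cB p y).
Proof.
case: y => [|[|[|y]]] // _; rewrite /PB /cB; try rewrite shc_mv; rewrite ?opprK ?oppr0 //; exact: eq_sym.
Qed.

Lemma ev_sum (v : vtx) (p : cellT) (x : cfg) : ev v p x = \sum_(y < 3) (if p == Pv v y then floc y (loc v x) else 0).
Proof.
rewrite /ev; case: idxP => [y hy ->|hn].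
  rewrite (bigD1 (Ordinal hy)) //= eqxx big1 ?addr0 // => j /= hj.
  by rewrite Pv_neq // eq_sym; case: eqP => // hjy; case/eqP: hj; apply: val_inj.
by rewrite big1 // => j _; rewrite (negbTE (hn j (ltn_ord j))).
Qed.

Lemma sum_vtx (F : vtx -> Z4) :
  \sum_(v : vtx) F v = \sum_(c : cellT) (F (c, true) + F (c, false)).
Proof.
symmetry; rewrite (eq_bigr (fun c => \sum_(b : bool) F (c, b))); last first.
  by move=> c _; rewrite big_bool.
by rewrite pair_big; apply: eq_bigr => -[c b].
Qed.

Lemma sum_pick (t : cellT) (G : cellT -> Z4) :
  \sum_(c : cellT) (if c == t then G c else 0) = G t.
Proof. by rewrite -big_mkcond big_pred1_eq. Qed.

Lemma E_expand (p : cellT) (x : cfg) : E p x =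
  \sum_(y < 3) (floc y (loc (cA p y, true) x) + floc y (loc (cB p y, false) x)).
Proof.
rewrite /E (eq_bigr _ (fun v _ => ev_sum v p x)) exchange_big /=.
apply: eq_bigr => y _; rewrite sum_vtx big_split /=.
rewrite (eq_bigr (fun c : cellT => if c == cA p y then floc y (loc (c, true) x) else 0)); last first.
  by move=> c _; rewrite /Pv /= PA_cA.
rewrite sum_pick.
rewrite (eq_bigr (fun c : cellT => if c == cB p y then floc y (loc (c, false) x) else 0)); last first.
  by move=> c _; rewrite /Pv /= PB_cB.
by rewrite sum_pick.
Qed.

Lemma sum3 (F : nat -> Z4) : \sum_(y < 3) F y = F 0%N + F 1%N + F 2%N.
Proof. by rewrite !big_ord_recl big_ord0 addr0 addrA. Qed.

Lemma E_explicit (p : cellT) (x : cfg) : E p x =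
  floc 0 (x (pl_edge p 1), x (pl_edge p 12), x (pl_edge p 6))
  + floc 0 (x (pl_edge p 4), x (pl_edge p 9), x (pl_edge p 3))
  + (floc 1 (x (pl_edge p 8), x (pl_edge p 2), x (pl_edge p 3))
  + floc 1 (x (pl_edge p 11), x (pl_edge p 5), x (pl_edge p 6)))
  + (floc 2 (x (pl_edge p 4), x (pl_edge p 5), x (pl_edge p 10))
  + floc 2 (x (pl_edge p 1), x (pl_edge p 2), x (pl_edge p 7))).
Proof.
rewrite E_expand (sum3 (fun y => floc y (loc (cA p y, true) x) + floc y (loc (cB p y, false) x))); congr (_ + _ + _); congr (_ + _); congr (floc _ _);
  rewrite /loc /edv /cA /cB /pl_edge /=; rewrite ?shcA ?addr0 ?add0r ?addNr ?shc00 //.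
Qed.

Lemma phi6 (a b c d e f : Z4) :
  phi (a + b + (c + d) + (e + f)) = phi a * phi b * phi c * phi d * phi e * phi f.
Proof. by rewrite !phiD !mulrA. Qed.

Lemma rearr (s1 s2 s3 s4 s5 s6 i1 i2 i3 i4 i5 i6 : algC) :
  (s1 * (s2 * (s3 * (s4 * (s5 * (s6 * 1)))))) * i1 * i2 * i3 * i4 * i5 * i6 =
  s1 * i1 * (s4 * i4) * (s3 * i3) * (s6 * i6) * (s5 * i5) * (s2 * i2).
Proof. ring. Qed.

Lemma bphaseE (p : cellT) (x : cfg) : bphase p x = phi (E p x).
Proof.
rewrite E_explicit phi6.
rewrite (K0 (x (pl_edge p 1)) (x (pl_edge p 12)) (x (pl_edge p 6))).
rewrite (K0' (x (pl_edge p 4)) (x (pl_edge p 9)) (x (pl_edge p 3))).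
rewrite (K1 (x (pl_edge p 8)) (x (pl_edge p 2)) (x (pl_edge p 3))).
rewrite (K1 (x (pl_edge p 11)) (x (pl_edge p 5)) (x (pl_edge p 6))).
rewrite (K2 (x (pl_edge p 4)) (x (pl_edge p 5)) (x (pl_edge p 10))).
rewrite (K2 (x (pl_edge p 1)) (x (pl_edge p 2)) (x (pl_edge p 7))).
rewrite /bphase; lazy beta zeta.
do 6! (rewrite big_ltn; last by []).
rewrite big_geq; last by [].
change (prev6 1) with 6%N; change (prev6 2) with 1%N; change (prev6 3) with 2%N.
change (prev6 4) with 3%N; change (prev6 5) with 4%N; change (prev6 6) with 5%N.
rewrite /np /nm.
exact: rearr.
Qed.
End Fac.


Section Main.
Variables L1 L2 : nat.
Local Notation cellT := (cell L1 L2).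
Local Notation vtx := (vertex L1 L2).
Local Notation edg := (edge L1 L2).
Local Notation cfg := (config L1 L2).

Lemma cxor0 (y : cfg) : cxor y (czero L1 L2) = y.
Proof. by apply/ffunP => e; rewrite !ffunE addbF. Qed.
Lemma cxorA (x y z : cfg) : cxor x (cxor y z) = cxor (cxor x y) z.
Proof. by apply/ffunP => e; rewrite !ffunE addbA. Qed.
Lemma cxorAC (x y z : cfg) : cxor (cxor x y) z = cxor (cxor x z) y.
Proof. by apply/ffunP => e; rewrite !ffunE addbAC. Qed.
Lemma xsum_cons (p : cellT) t : xsum (p :: t) = cxor (alpha_pl p) (xsum t).
Proof. by []. Qed.

Lemma theta_gen (a : cfg) (ps : seq cellT) (i : cfg) :
  \prod_(k < size ps)
     (bphase (nth (0, 0) ps k) (cxor (cxor i a) (xsum (take k ps)))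
      / bphase (nth (0, 0) ps k) (cxor i (xsum (take k ps))))
  = phi (Fp ps (cxor i a) - Fp ps i).
Proof.
elim: ps i => [|p ps IH] i; first by rewrite big_ord0 subrr phi0.
rewrite big_ord_recl.
rewrite (eq_bigr (fun k : 'I_(size ps) =>
   bphase (nth (0, 0) ps k) (cxor (cxor (cxor i (alpha_pl p)) a) (xsum (take k ps)))
   / bphase (nth (0, 0) ps k) (cxor (cxor i (alpha_pl p)) (xsum (take k ps))))); last first.
  move=> k _; rewrite lift0.
  have -> : nth (0, 0) (p :: ps) k.+1 = nth (0, 0) ps k by [].
  have -> : take k.+1 (p :: ps) = p :: take k ps by [].
  by rewrite xsum_cons !cxorA (cxorAC i a).
rewrite IH.
have -> : nth (0, 0) (p :: ps) (@ord0 (size ps)) = p by [].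
have -> : take (@ord0 (size ps)) (p :: ps) = [::] by [].
rewrite /= !cxor0 !bphaseE (cxorAC i a).
rewrite -phiB -phiD; congr phi.
by rewrite opprD addrACA.
Qed.

Lemma thetaE (es : seq edg) (i : cfg) (ps : seq cellT) :
  theta es i ps = phi (Fp ps (cxor i (alpha_path es)) - Fp ps i).
Proof. exact: theta_gen. Qed.

Lemma inc_edv (v : vtx) k : (k < 3)%N -> incident v (edv v k).
Proof.
case: v => c [] /=; case: k => [|[|[|k]]] // _;
  rewrite /incident /edv /endpoints /ea /eb /ec /= ?eqxx ?orbT //.
- by rewrite shcA addrN addr0 shc00 eqxx orbT.
- by rewrite shcA addrN addr0 shc00 eqxx orbT.
Qed.

Lemma alpha_path_mem (es : seq edg) e : alpha_path es e -> e \in es.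
Proof.
elim: es => [|f es IH]; first by rewrite /alpha_path /= ffunE.
rewrite /alpha_path /= -/(alpha_path es) !ffunE in_cons.
by case: (e == f) => //= /IH ->; rewrite orbT.
Qed.

Lemma edge_cancel (T : nat -> edg -> Z4) :
  \sum_(v : vtx) sg v.2 * (T 0%N (edv v 0) + T 1%N (edv v 1) + T 2%N (edv v 2)) = 0.
Proof.
rewrite sum_vtx /=.
rewrite (eq_bigr (fun c => (T 0%N (ea c) + T 1%N (eb c) + T 2%N (ec c))
   - (T 0%N (ea c) + T 1%N (eb (shc c 1 0)) + T 2%N (ec (shc c 0 1))))); last first.
  by move=> c _; rewrite /sg /edv /= mul1r mulN1r.
have inj1 : injective (fun c : cellT => shc c 1 0).
  move=> c d /(congr1 (fun z => shc z (-1) 0)); by rewrite !shcA !addrN !addr0 !shc00.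
have inj2 : injective (fun c : cellT => shc c 0 1).
  move=> c d /(congr1 (fun z => shc z 0 (-1))); by rewrite !shcA !addrN !addr0 !shc00.
rewrite sumrB !big_split /=.
rewrite [\sum_(c : cellT) T 1%N (eb c)](reindex_inj inj1) /=.
rewrite [\sum_(c : cellT) T 2%N (ec c)](reindex_inj inj2) /=.
by rewrite subrr.
Qed.

Theorem main_eq (es : seq edg) (ps qs : seq cellT) (hps : uniq ps) (hqs : uniq qs)
    (hres : forall e : edg, inConn es e -> xsum ps e = xsum qs e) (i : cfg) :
  theta es i ps = theta es i qs.
Proof.
rewrite !thetaE; congr phi.
apply/eqP; rewrite eq_sym -subr_eq0; apply/eqP.
set a := alpha_path es.
rewrite !Fp_sum -!sumrB.
rewrite (eq_bigr (fun v : vtx => Delta (pmap (idx v) ps) (pmap (idx v) qs) (loc v i) (loc v a))); last first.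
  by move=> v _; rewrite /Delta !loc_cxor.
rewrite (eq_bigr (fun v : vtx => Rhs v.2 (pmap (idx v) ps) (pmap (idx v) qs) (loc v i) (loc v a))); last first.
  move=> v _; apply: local_main; rewrite ?pmap_all_idx ?pmap_uniq_idx //.
  case E: (loc v a == tzero) => //=.
  have [k hk ak] : exists2 k, (k < 3)%N & a (edv v k).
    move: E; rewrite /loc /tzero.
    case E0: (a (edv v 0)); first by exists 0%N.
    case E1: (a (edv v 1)); first by exists 1%N.
    case E2: (a (edv v 2)); first by exists 2%N.
    by [].
  have fin : edv v k \in es by apply: alpha_path_mem.
  have conn k' : (k' < 3)%N -> inConn es (edv v k').
    move=> hk'; apply/orP; right; apply/hasP; exists (edv v k) => //.
    by apply/existsP; exists v; rewrite !inc_edv.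
  rewrite !par_xsum /loc !hres ?conn //.
rewrite (eq_bigr (fun v : vtx => sg v.2 *
   ((fun k e => b2 (a e) * psi k (esub e ps) (esub e qs) (i e)) 0%N (edv v 0)
  + (fun k e => b2 (a e) * psi k (esub e ps) (esub e qs) (i e)) 1%N (edv v 1)
  + (fun k e => b2 (a e) * psi k (esub e ps) (esub e qs) (i e)) 2%N (edv v 2)))); last first.
  by move=> v _; rewrite /Rhs !subl_esub.
exact: (edge_cancel (fun k e => b2 (a e) * psi k (esub e ps) (esub e qs) (i e))).
Qed.
End Main.

Theorem lemma2 (L1 L2 : nat) (hL1 : (3 <= L1)%N) (hL2 : (3 <= L2)%N)
    (v0 : vertex L1 L2) (es : seq (edge L1 L2)) (hwalk : is_walk v0 es)
    (ps qs : seq (cell L1 L2)) (hps : uniq ps) (hqs : uniq qs)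
    (hpsB : all (inB es) ps) (hqsB : all (inB es) qs)
    (hdiff : [set p in ps] != [set p in qs])
    (hres : forall e : edge L1 L2, inConn es e -> xsum ps e = xsum qs e)
    (i : config L1 L2) :
  theta es i ps = theta es i qs.
Proof. exact: (main_eq hps hqs hres i). Qed.
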